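(* Let $p\geqslant1$ and $\varphi,\psi\in\mathfrak M_p$. Then $\varphi=\psi$ is a formal median identity if and only if $\varphi\sim\psi$.
   Context: A median algebra is a set with a ternary operation $m$ satisfying $m(a,a,b)=a$, invariance under permutations of the arguments, and $m(m(a,b,c),b,d)=m(a,b,m(c,b,d))$. Let $\Omega_p=\{\alpha_1,\ldots,\alpha_p\}$ and add two symbols $\langle,\rangle$. The set $\mathfrak M_p$ of formal ternary expressions is the smallest set of finite words over $\Omega_p\cup\{\langle,\rangle\}$ containing each $\alpha_i$ and containing $\langle\varphi_1\varphi_2\varphi_3\rangle$ whenever $\varphi_1,\varphi_2,\varphi_3$ belong to it; each element not in $\Omega_p$ is uniquely of the form $\langle\varphi_1\varphi_2\varphi_3\rangle$. For a set $Y$ with ternary operation $\nu$ and $y_1,\ldots,y_p\in Y$, the realisation $\varphi_Y(y_1,\ldots,y_p)$ is defined inductively by $(\alpha_i)_Y=y_i$ and $\langle\varphi_1\varphi_2\varphi_3\rangle_Y=\nu((\varphi_1)_Y,(\varphi_2)_Y,(\varphi_3)_Y)$. The equation $\varphi=\psi$ is a formal median identity if $\varphi_Y(y_1,\ldots,y_p)=\psi_Y(y_1,\ldots,y_p)$ for every median algebra $(Y,\nu)$ and all $y_i\in Y$. The complexity $\xi$ is defined by $\xi(\alpha_i)=0$ and $\xi(\langle\varphi_1\varphi_2\varphi_3\rangle)=\max_i\xi(\varphi_i)+1$. Elementary transformations are defined inductively on complexity: for $\varphi\in\Omega_p$ the only ones are $\varphi\mapsto\langle\varphi\varphi\psi\rangle$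 ($\psi\in\mathfrak M_p$). For $\varphi$ of complexity $n\geqslant1$: (I) $\varphi\mapsto\langle\varphi\varphi\psi\rangle$ for any $\psi\in\mathfrak M_p$, and if $\varphi=\langle\psi\psi\varphi'\rangle$ then $\varphi\mapsto\psi$; (II) if $\varphi=\langle\varphi_1\varphi_2\varphi_3\rangle$ then $\varphi\mapsto\langle\varphi_{\sigma(1)}\varphi_{\sigma(2)}\varphi_{\sigma(3)}\rangle$ for any permutation $\sigma$; (III) if $\varphi=\langle\langle\varphi_1\varphi_2\varphi_3\rangle\varphi_2\varphi_4\rangle$ then $\varphi\mapsto\langle\varphi_1\varphi_2\langle\varphi_3\varphi_2\varphi_4\rangle\rangle$, and if $\varphi=\langle\varphi_1\varphi_2\langle\varphi_3\varphi_2\varphi_4\rangle\rangle$ then $\varphi\mapsto\langle\langle\varphi_1\varphi_2\varphi_3\rangle\varphi_2\varphi_4\rangle$; (IV) if $\varphi=\langle\varphi_1\varphi_2\varphi_3\rangle$ and $\varphi_1'$ is obtained from $\varphi_1$ by an elementary transformation, then $\varphi\mapsto\langle\varphi_1'\varphi_2\varphi_3\rangle$. $\sim$ denotes the equivalence relation on $\mathfrak M_p$ generated by elementary transformations (transitive closure of the symmetric relation ''obtained by one elementary transformation''). *)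

(* Defs.v *)
From mathcomp Require Import all_boot all_fingroup.
From Stdlib Require Import Relation_Operators.
Set Implicit Arguments. Unset Strict Implicit. Unset Printing Implicit Defensive.

Definition is_median_algebra (Y : Type) (m : Y -> Y -> Y -> Y) : Prop :=
  (forall a b, m a a b = a) /\
  (forall a b c,
     m a b c = m b a c /\ m a b c = m a c b /\ m a b c = m c b a /\
     m a b c = m b c a /\ m a b c = m c a b) /\
  (forall a b c d, m (m a b c) b d = m a b (m c b d)).

(* Formal ternary expressions M_p over the alphabet {alpha_1..alpha_p}. *)
Inductive mexpr (p : nat) : Type :=
| Var : 'I_p -> mexpr p
| Node : mexpr p -> mexpr p -> mexpr p -> mexpr p.

Fixpoint realise (p : nat) (Y : Type) (nu : Y -> Y -> Y -> Y) (y : 'I_p -> Y)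
  (e : mexpr p) : Y :=
  match e with
  | Var i => y i
  | Node e1 e2 e3 => nu (realise nu y e1) (realise nu y e2) (realise nu y e3)
  end.

Fixpoint complexity (p : nat) (e : mexpr p) : nat :=
  match e with
  | Var _ => 0
  | Node e1 e2 e3 => (maxn (complexity e1) (maxn (complexity e2) (complexity e3))).+1
  end.

Definition formal_median_identity (p : nat) (phi psi : mexpr p) : Prop :=
  forall (Y : Type) (nu : Y -> Y -> Y -> Y), is_median_algebra nu ->
  forall y : 'I_p -> Y, realise nu y phi = realise nu y psi.

Definition i0 : 'I_3 := @Ordinal 3 0 isT.
Definition i1 : 'I_3 := @Ordinal 3 1 isT.
Definition i2 : 'I_3 := @Ordinal 3 2 isT.

Inductive elem (p : nat) : mexpr p -> mexpr p -> Prop :=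
| ElemI_dup : forall phi psi, elem phi (Node phi phi psi)
| ElemI_abs : forall psi phi', elem (Node psi psi phi') psi
| ElemII : forall (s : 'S_3) (f : 'I_3 -> mexpr p),
    elem (Node (f i0) (f i1) (f i2)) (Node (f (s i0)) (f (s i1)) (f (s i2)))
| ElemIII_l : forall a b c d,
    elem (Node (Node a b c) b d) (Node a b (Node c b d))
| ElemIII_r : forall a b c d,
    elem (Node a b (Node c b d)) (Node (Node a b c) b d)
| ElemIV : forall a a' b c, elem a a' -> elem (Node a b c) (Node a' b c).

Definition mequiv (p : nat) (phi psi : mexpr p) : Prop :=
  clos_trans (mexpr p) (fun x y => elem x y \/ elem y x) phi psi.

(* Main.v *)
Require Import Defs.
From mathcomp Require Import all_boot all_fingroup.
From Stdlib Require Import Relation_Operators FunctionalExtensionality PropExtensionality ProofIrrelevance.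

Set Implicit Arguments.
Section S.
Variable p : nat.
Implicit Types a b c d e u v w : mexpr p.

Definition fsel (a b c : mexpr p) (i : 'I_3) : mexpr p :=
  match nat_of_ord i with 0 => a | 1 => b | _ => c end.

Lemma elem_sw01 a b c : elem (Node a b c) (Node b a c).
Proof.
have := ElemII (tperm i0 i1) (fsel a b c).
by rewrite tpermL tpermR tpermD.
Qed.

Lemma elem_sw12 a b c : elem (Node a b c) (Node a c b).
Proof.
have := ElemII (tperm i1 i2) (fsel a b c).
by rewrite tpermL tpermR tpermD.
Qed.

Lemma meq_step (x y : mexpr p) : elem x y -> mequiv x y.
Proof. by move=> h; apply: t_step; left. Qed.
Lemma meq_stepb (x y : mexpr p) : elem y x -> mequiv x y.
Proof. by move=> h; apply: t_step; right. Qed.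
Lemma meq_trans (x y z : mexpr p) : mequiv x y -> mequiv y z -> mequiv x z.
Proof. exact: t_trans. Qed.
Lemma meq_refl (x : mexpr p) : mequiv x x.
Proof.
apply: (@meq_trans _ (Node x x x)); [apply: meq_step | apply: meq_stepb]; constructor.
Qed.
Lemma meq_sym (x y : mexpr p) : mequiv x y -> mequiv y x.
Proof.
elim=> [u v [h|h]|u v w _ h1 _ h2]; first exact: meq_stepb.
  exact: meq_step.
exact: meq_trans h2 h1.
Qed.

Lemma meq_sw01 a b c : mequiv (Node a b c) (Node b a c).
Proof. apply: meq_step; exact: elem_sw01. Qed.
Lemma meq_sw12 a b c : mequiv (Node a b c) (Node a c b).
Proof. apply: meq_step; exact: elem_sw12. Qed.

Lemma cong1 (a a' b c : mexpr p) : mequiv a a' -> mequiv (Node a b c) (Node a' b c).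
Proof.
elim=> [u v [h|h]|u v w _ h1 _ h2].
- by apply: meq_step; constructor.
- by apply: meq_stepb; constructor.
exact: meq_trans h1 h2.
Qed.

Lemma cong (a a' b b' c c' : mexpr p) : mequiv a a' -> mequiv b b' -> mequiv c c' ->
  mequiv (Node a b c) (Node a' b' c').
Proof.
move=> ha hb hc.
apply: (meq_trans (cong1 b c ha)).
apply: (meq_trans (meq_sw01 _ _ _)).
apply: (meq_trans (cong1 a' c hb)).
apply: (meq_trans (meq_sw01 _ _ _)).
apply: (meq_trans (meq_sw12 _ _ _)).
apply: (meq_trans (meq_sw01 _ _ _)).
apply: (meq_trans (cong1 a' b' hc)).
apply: (meq_trans (meq_sw01 _ _ _)).
exact: meq_sw12.
Qed.

Definition cls (e : mexpr p) : mexpr p -> Prop := fun x => mequiv e x.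

Lemma cls_eq (e e' : mexpr p) : mequiv e e' -> cls e = cls e'.
Proof.
move=> h; apply: functional_extensionality => x; apply: propositional_extensionality.
rewrite /cls; split=> h'.
  exact: meq_trans (meq_sym h) h'.
exact: meq_trans h h'.
Qed.

Lemma cls_eq_inv (e e' : mexpr p) : cls e = cls e' -> mequiv e e'.
Proof.
move=> h; have : cls e' e' by exact: meq_refl.
by rewrite -h.
Qed.

Definition nuP (P Q R : mexpr p -> Prop) : mexpr p -> Prop :=
  fun x => exists a b c, P a /\ Q b /\ R c /\ mequiv (Node a b c) x.

Lemma nuP_cls a b c : nuP (cls a) (cls b) (cls c) = cls (Node a b c).
Proof.
apply: functional_extensionality => x; apply: propositional_extensionality.
split.
  move=> [a1 [b1 [c1 [ha [hb [hc h]]]]]].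
  exact: meq_trans (cong ha hb hc) h.
move=> h; exists a, b, c; do 3 (split; first exact: meq_refl); exact: h.
Qed.

Definition Y := {P : mexpr p -> Prop | exists e, P = cls e}.

Lemma nu_ok (x y z : Y) : exists e, nuP (sval x) (sval y) (sval z) = cls e.
Proof.
case: x => [P [a Ha]]; case: y => [Q [b Hb]]; case: z => [R [c Hc]] /=.
subst P Q R.
by exists (Node a b c); rewrite nuP_cls.
Qed.

Definition nu (x y z : Y) : Y := exist _ _ (nu_ok x y z).
Definition mk (e : mexpr p) : Y := exist _ (cls e) (ex_intro _ e erefl).

Lemma Yeq (x y : Y) : sval x = sval y -> x = y.
Proof.
case: x => [P hP]; case: y => [Q hQ] /= h; subst Q.
by rewrite (proof_irrelevance _ hP hQ).
Qed.

Lemma realise_var e : sval (realise nu (fun i => mk (Var i)) e) = cls e.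
Proof.
elim: e => [i|a iha b ihb c ihc] //=.
by rewrite iha ihb ihc nuP_cls.
Qed.

Lemma Ycase (x : Y) : exists e, x = mk e.
Proof.
case: x => [P [a Ha]]; exists a; apply: Yeq => /=; exact: Ha.
Qed.

Lemma nu_mk a b c : nu (mk a) (mk b) (mk c) = mk (Node a b c).
Proof. by apply: Yeq => /=; rewrite nuP_cls. Qed.

Lemma mk_eq a b : mequiv a b -> mk a = mk b.
Proof. by move=> h; apply: Yeq => /=; apply: cls_eq. Qed.

Lemma Y_median : is_median_algebra nu.
Proof.
split; [|split].
- move=> x y; case: (Ycase x) => a ->; case: (Ycase y) => b ->.
  rewrite nu_mk; apply: mk_eq; apply: meq_step; constructor.
- move=> x y z; case: (Ycase x) => a ->; case: (Ycase y) => b ->;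
  case: (Ycase z) => c ->; rewrite !nu_mk.
  split; [|split; [|split; [|split]]]; apply: mk_eq.
  + exact: meq_sw01.
  + exact: meq_sw12.
  + apply: (meq_trans (meq_sw01 _ _ _)); apply: (meq_trans (meq_sw12 _ _ _)).
    exact: meq_sw01.
  + apply: (meq_trans (meq_sw01 _ _ _)); exact: meq_sw12.
  + apply: (meq_trans (meq_sw12 _ _ _)); exact: meq_sw01.
- move=> x y z w; case: (Ycase x) => a ->; case: (Ycase y) => b ->;
  case: (Ycase z) => c ->; case: (Ycase w) => d ->; rewrite !nu_mk.
  apply: mk_eq; apply: meq_step; constructor.
Qed.

End S.

Lemma ord3 (i : 'I_3) : i = i0 \/ i = i1 \/ i = i2.
Proof.
case: i => [[|[|[|n]]] h].
- by left; apply: val_inj.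
- by right; left; apply: val_inj.
- by right; right; apply: val_inj.
- by [].
Qed.

Lemma sound (p : nat) (x y : mexpr p) : elem x y -> formal_median_identity x y.
Proof.
move=> h Y0 nu0 [A1 [A2 A3]] y0.
elim: h => /=.
- by move=> phi psi; rewrite A1.
- by move=> psi phi'; rewrite A1.
- move=> s f.
  have ne01 : i0 <> i1 by move/(f_equal val).
  have ne02 : i0 <> i2 by move/(f_equal val).
  have ne12 : i1 <> i2 by move/(f_equal val).
  have inj := @perm_inj _ s.
  set g := fun i => realise nu0 y0 (f i).
  rewrite -/(g i0) -/(g i1) -/(g i2) -/(g (s i0)) -/(g (s i1)) -/(g (s i2)).
  have [E1 [E2 [E3 [E4 E5]]]] := A2 (g i0) (g i1) (g i2).
  case: (ord3 (s i0)) => [Ha|[Ha|Ha]]; case: (ord3 (s i1)) => [Hb|[Hb|Hb]];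
  case: (ord3 (s i2)) => [Hc|[Hc|Hc]];
  try (have := inj _ _ (etrans Ha (esym Hb)); by move/(f_equal val));
  try (have := inj _ _ (etrans Ha (esym Hc)); by move/(f_equal val));
  try (have := inj _ _ (etrans Hb (esym Hc)); by move/(f_equal val));
  by rewrite Ha Hb Hc.
- by move=> a b c d; rewrite A3.
- by move=> a b c d; rewrite A3.
- by move=> a a' b c _ ->.
Qed.

Theorem corollary3p10 (p : nat) (hp : 1 <= p) (phi psi : mexpr p) :
  formal_median_identity phi psi <-> mequiv phi psi.
Proof.
split.
  move=> h; have := h _ _ (@Y_median p) (fun i => mk (Var i)).
  move/(f_equal (@proj1_sig _ _)); rewrite !realise_var.
  exact: cls_eq_inv.
elim=> [u v [hh|hh]|u v w _ h1 _ h2].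
- exact: sound.
- by move=> Y nu hm y; rewrite (sound hh hm).
- by move=> Y nu hm y; rewrite (h1 _ _ hm) (h2 _ _ hm).
Qed.
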